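(* If $H$ is a $2$-regular uniform hypergraph, then the Graver basis of $I_H$ is the unique minimal generating set of $I_H$.
   Context: A hypergraph $H$ has vertex set $V=\{1,\dots,n\}$ and a set $E(H)$ of edges, each a nonempty subset of $V$ (no repeated edges). It is uniform if all edges have the same size and $2$-regular if every vertex lies in exactly two edges. For a field $K$, the toric ideal $I_H$ is the kernel of $\phi_H: K[t_e : e\in E(H)]\to K[x_1,\dots,x_n]$, $t_e\mapsto\prod_{j\in e}x_j$. The Graver basis of $I_H$ is the set of primitive binomials of $I_H$, where a binomial $u-v\in I_H$ ($u,v$ monomials) is primitive if there is no other binomial $u'-v'\in I_H$ with $u'\mid u$ and $v'\mid v$. ''Unique minimal generating set'' means the Graver basis generates $I_H$ minimally and every minimal binomial generating set of $I_H$ coincides with it up to the signs of its elements. *)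

(* Defs.v *)
From HB Require Import structures.
From mathcomp Require Import all_boot all_order all_algebra.
From mathcomp Require Import mpoly.
Set Implicit Arguments. Unset Strict Implicit. Unset Printing Implicit Defensive.
Import GRing.Theory.
Local Open Scope ring_scope.

Definition is_hypergraph (n m : nat) (edge : 'I_m -> {set 'I_n}) : Prop :=
  injective edge /\ (forall e, edge e != set0).

Definition uniform_hg (n m : nat) (edge : 'I_m -> {set 'I_n}) : Prop :=
  exists d : nat, forall e, #|edge e| = d.

Definition two_regular_hg (n m : nat) (edge : 'I_m -> {set 'I_n}) : Prop :=
  forall j : 'I_n, #|[set e | j \in edge e]| = 2.

Definition phiH (K : fieldType) (n m : nat) (edge : 'I_m -> {set 'I_n})
  (p : {mpoly K[m]}) : {mpoly K[n]} :=
  comp_mpoly [tuple \prod_(j in edge e) 'X_j | e < m] p.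

Definition toric_ideal (K : fieldType) (n m : nat) (edge : 'I_m -> {set 'I_n})
  (p : {mpoly K[m]}) : Prop := phiH edge p = 0.

Definition binom (K : fieldType) (m : nat) (u v : 'X_{1..m}) : {mpoly K[m]} :=
  'X_[u] - 'X_[v].

Definition is_binomial (K : fieldType) (m : nat) (p : {mpoly K[m]}) : Prop :=
  exists u v : 'X_{1..m}, p = binom K u v.

Definition mdivides (m : nat) (u' u : 'X_{1..m}) : Prop :=
  forall i : 'I_m, (u' i <= u i)%N.

Definition primitive_binomial (K : fieldType) (n m : nat)
  (edge : 'I_m -> {set 'I_n}) (p : {mpoly K[m]}) : Prop :=
  exists u v : 'X_{1..m},
    [/\ p = binom K u v, u <> v, toric_ideal edge p &
        forall u' v' : 'X_{1..m}, u' <> v' ->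
          toric_ideal edge (binom K u' v') ->
          mdivides u' u -> mdivides v' v -> binom K u' v' = p].

Definition graver_basis (K : fieldType) (n m : nat) (edge : 'I_m -> {set 'I_n})
  : {mpoly K[m]} -> Prop := primitive_binomial edge.

Definition in_gen_ideal (R : comNzRingType) (S : R -> Prop) (p : R) : Prop :=
  exists s : seq (R * R), (forall x, x \in s -> S x.2) /\
                          p = \sum_(x <- s) x.1 * x.2.

Definition generates (R : comNzRingType) (S I : R -> Prop) : Prop :=
  forall p, in_gen_ideal S p <-> I p.

(* S is a minimal generating set of I: it generates I and no element
   of S lies in the ideal generated by the other elements (equivalently,
   no proper subset of S generates I). *)
Definition minimal_generating_set (R : comNzRingType) (S I : R -> Prop) : Prop :=
  generates S I /\
  forall s, S s -> ~ in_gen_ideal (fun q => S q /\ q <> s) s.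

Definition eq_up_to_sign (R : comNzRingType) (S G : R -> Prop) : Prop :=
  (forall s, S s -> G s \/ G (- s)) /\ (forall g, G g -> S g \/ S (- g)).

(* "G is the unique minimal generating set of I": G (with one sign chosen for
   each element) generates I minimally, and every minimal binomial generating
   set of I coincides with G up to signs. *)
Definition unique_minimal_generating_set (K : fieldType) (m : nat)
  (G I : {mpoly K[m]} -> Prop) : Prop :=
  (exists S, minimal_generating_set S I /\ eq_up_to_sign S G
             /\ (forall s, S s -> G s)) /\
  (forall S, minimal_generating_set S I -> (forall s, S s -> is_binomial s) ->
             eq_up_to_sign S G).

(* Main.v *)
Require Import Defs.
From mathcomp Require Import all_boot all_order all_algebra.
From mathcomp Require Import mpoly zify.
From Stdlib Require Import Classical_Prop.
Set Implicit Arguments. Unset Strict Implicit. Unset Printing Implicit Defensive.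
Import GRing.Theory.
Local Open Scope ring_scope.

Section Ideal.
Context (R : comNzRingType) (T : R -> Prop).

Lemma ideal0 : in_gen_ideal T 0.
Proof. by exists [::]; split => //; rewrite big_nil. Qed.

Lemma idealD p q : in_gen_ideal T p -> in_gen_ideal T q -> in_gen_ideal T (p + q).
Proof.
case=> s1 [h1 ->] [s2 [k2 ->]]; exists (s1 ++ s2); split; last by rewrite big_cat.
by move=> x; rewrite mem_cat => /orP [/h1|/k2].
Qed.

Lemma idealM c p : in_gen_ideal T p -> in_gen_ideal T (c * p).
Proof.
case=> s [h1 ->]; exists [seq (c * x.1, x.2) | x <- s]; split.
  by move=> x /mapP [y hy ->] /=; apply: h1.
by rewrite big_map mulr_sumr; apply: eq_bigr => x _ /=; rewrite mulrA.
Qed.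

Lemma ideal_gen q : T q -> in_gen_ideal T q.
Proof.
move=> hq; exists [:: (1, q)]; split; last by rewrite big_seq1 mul1r.
by move=> x; rewrite inE => /eqP ->.
Qed.

Lemma ideal_sum (I : Type) (r : seq I) (F : I -> R) :
  (forall i, in_gen_ideal T (F i)) -> in_gen_ideal T (\sum_(i <- r) F i).
Proof.
move=> h; elim: r => [|x r IH]; first by rewrite big_nil; apply: ideal0.
by rewrite big_cons; apply: idealD.
Qed.

End Ideal.

Lemma ideal_transfer (R : comNzRingType) (T1 T2 : R -> Prop) p :
  in_gen_ideal T1 p -> (forall q, T1 q -> T2 q \/ T2 (- q)) -> in_gen_ideal T2 p.
Proof.
case=> s [hs ->] h; elim: s hs => [|x s IH] hs; first by rewrite big_nil; apply: ideal0.
rewrite big_cons; apply: idealD; last by apply: IH => y hy; apply: hs; rewrite inE hy orbT.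
have := hs x; rewrite inE eqxx => /(_ isT) /h [hq|hq].
  by apply: idealM; apply: ideal_gen.
by rewrite -mulrNN; apply: idealM; apply: ideal_gen.
Qed.

Lemma ideal_coef (K : fieldType) (m : nat) (T : {mpoly K[m]} -> Prop) p z :
  in_gen_ideal T p -> p@_z != 0 -> exists q c, T q /\ (c * q)@_z != 0.
Proof.
case=> s [hs ->]; rewrite raddf_sum /=.
case: (boolP (has (fun x : {mpoly K[m]} * {mpoly K[m]} => (x.1 * x.2)@_z != 0) s)).
  by move=> /hasP [x hx hnz] _; exists x.2, x.1; split => //; apply: hs.
move=> /hasPn hall; rewrite big1_seq ?eqxx // => x hx.
by apply/eqP; have := hall x hx; rewrite negbK.
Qed.

Section Toric.
Context (K : fieldType) (n m : nat) (edge : 'I_m -> {set 'I_n}).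

Definition Am (u : 'X_{1..m}) : 'X_{1..n} :=
  [multinom (\sum_(e < m | j \in edge e) u e)%N | j < n].

Lemma AmE u j : Am u j = (\sum_(e < m | j \in edge e) u e)%N.
Proof. by rewrite mnmE. Qed.

Lemma AmD u v : Am (u + v)%MM = (Am u + Am v)%MM.
Proof.
by apply/mnmP=> j; rewrite mnmDE !AmE -big_split /=; apply: eq_bigr=> e _; rewrite mnmDE.
Qed.

Lemma XprodE k (I : Type) (r : seq I) (P : pred I) (F : I -> 'X_{1..k}) :
  \prod_(i <- r | P i) ('X_[F i] : {mpoly K[k]}) = 'X_[\big[+%MM/0%MM]_(i <- r | P i) F i].
Proof.
by rewrite (big_morph (fun x : 'X_{1..k} => ('X_[x] : {mpoly K[k]})) (@mpolyXD _ _) (@mpolyX0 _ _)).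
Qed.

Lemma phiX u : phiH edge ('X_[u] : {mpoly K[m]}) = 'X_[Am u].
Proof.
rewrite /phiH comp_mpolyX.
under eq_bigr => i _ do rewrite tnth_mktuple XprodE mpolyXn.
rewrite XprodE; congr 'X_[_]; apply/mnmP => j.
rewrite AmE mnm_sumE [RHS]big_mkcond; apply: eq_bigr => e _ /=.
rewrite mulmnE mnm_sumE.
case: (boolP (j \in edge e)) => hj.
  rewrite (bigD1 j) //= mnm1E eqxx big1 ?addn0 ?mul1n // => i /andP [_ hij].
  by rewrite mnm1E (negbTE hij).
rewrite big1 ?mul0n // => i hi; rewrite mnm1E; case: eqP => // eij.
by rewrite -eij hi in hj.
Qed.


Lemma Xinj k (a b : 'X_{1..k}) : ('X_[a] : {mpoly K[k]}) = 'X_[b] -> a = b.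
Proof.
move=> h; have := congr1 (mcoeff a) h; rewrite !mcoeffX eqxx.
by case: eqP => // _ /eqP; rewrite oner_eq0.
Qed.

Lemma toricB u v : toric_ideal edge (binom K u v) <-> Am u = Am v.
Proof.
rewrite /toric_ideal /binom /phiH comp_mpolyB -!/(phiH edge _) !phiX.
split; first by move/eqP; rewrite subr_eq0 => /eqP /Xinj.
by move=> ->; rewrite subrr.
Qed.

Definition adj (x y : 'I_m) := (x != y) && [exists j, (j \in edge x) && (j \in edge y)].

Lemma adj_sym x y : adj x y = adj y x.
Proof.
rewrite /adj eq_sym; congr (_ && _); apply/existsP/existsP => [] [j /andP [h1 h2]];
  by exists j; rewrite h1 h2.
Qed.

Hypothesis hne : forall e, edge e != set0.
Hypothesis h2 : two_regular_hg edge.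

Lemma pair_ex j : exists x y, [/\ x != y, [set e | j \in edge e] = [set x; y],
   j \in edge x & j \in edge y].
Proof.
have /eqP/cards2P [x [y [hxy hS]]] := h2 j.
exists x, y; split => //.
  by have := set21 x y; rewrite -hS inE.
by have := set22 x y; rewrite -hS inE.
Qed.

Lemma sum_pair j x y (f : 'I_m -> nat) : x != y ->
  [set e | j \in edge e] = [set x; y] ->
  (\sum_(e < m | j \in edge e) f e = f x + f y)%N.
Proof.
move=> hxy hS.
rewrite (eq_bigl (fun e => e \in [set x; y])); last by move=> e; rewrite -hS inE.
by rewrite big_setU1 ?big_set1 // inE.
Qed.

Lemma adj_sum j x y (f : 'I_m -> nat) : adj x y -> j \in edge x -> j \in edge y ->
  (\sum_(e < m | j \in edge e) f e = f x + f y)%N.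
Proof.
move=> /andP [hxy _] hx hy; apply: sum_pair => //.
have hsub : [set x; y] \subset [set e | j \in edge e].
  by apply/subsetP => e; rewrite !inE => /orP [] /eqP ->.
apply/esym/eqP; rewrite eqEcard hsub /= cards2 hxy.
by rewrite (h2 j).
Qed.

Lemma KE u v x y : Am u = Am v -> adj x y -> (u x + u y = v x + v y)%N.
Proof.
move=> hA hxy; have := hxy; case/andP => _ /existsP [j /andP [hx hy]].
have := congr1 (fun w : 'X_{1..n} => w j) hA; rewrite /= !AmE.
by rewrite (@adj_sum j x y u hxy hx hy) (@adj_sum j x y v hxy hx hy).
Qed.

Lemma KZ w : Am w = 0%MM -> w = 0%MM.
Proof.
move=> hA; apply/mnmP => e; rewrite mnm0E.
have /set0Pn [j hj] := hne e.
have := congr1 (fun w : 'X_{1..n} => w j) hA; rewrite /= AmE mnm0E.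
rewrite (bigD1 e) //=; move/eqP; rewrite addn_eq0 => /andP [/eqP -> _].
by [].
Qed.

Lemma KZ2 u w : Am (u + w)%MM = Am u -> w = 0%MM.
Proof.
move=> h; apply: KZ; apply: (@addmI _ (Am u)); rewrite -AmD h.
by apply/mnmP => j; rewrite mnmDE mnm0E addn0.
Qed.

Definition comp (a : 'I_m) := [set e | connect adj a e].

Lemma closed_comp (X : {set 'I_m}) a :
  (forall x y, adj x y -> x \in X -> y \in X) -> a \in X -> comp a \subset X.
Proof.
move=> hX ha; apply/subsetP => e; rewrite inE => /connectP [p hp ->] {e}.
elim: p a ha hp => [|b p IH] a ha //= /andP [hab hp].
by apply: IH hp; apply: hX hab ha.
Qed.

Lemma comp_refl a : a \in comp a.
Proof. by rewrite inE connect0. Qed.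

Lemma comp_adj a x y : x \in comp a -> adj x y -> y \in comp a.
Proof.
rewrite !inE => hx hxy; apply: connect_trans hx _; exact: connect1.
Qed.

Lemma comp_sym a x : x \in comp a -> a \in comp x.
Proof.
move=> hx.
have : comp a \subset [set y | connect adj y a].
  apply: closed_comp; last by rewrite inE connect0.
  move=> y z hyz; rewrite !inE => hy; apply: connect_trans hy.
  by apply: connect1; rewrite adj_sym.
by move/subsetP/(_ x hx); rewrite !inE.
Qed.

Lemma comp_eq a x : x \in comp a -> comp x = comp a.
Proof.
move=> hx; apply/eqP; rewrite eqEsubset; apply/andP; split.
  apply: closed_comp => // y z hyz hy; exact: comp_adj hy hyz.
apply: closed_comp; [move=> y z hyz hy; exact: comp_adj hy hyz | exact: comp_sym].
Qed.

Lemma closed_comp2 (X : {set 'I_m}) a x :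
  (forall x y, adj x y -> x \in X -> y \in X) -> x \in X -> x \in comp a ->
  comp a \subset X.
Proof. by move=> hX hx /comp_eq <-; apply: closed_comp. Qed.


Definition chi (P : {set 'I_m}) : 'X_{1..m} := [multinom (e \in P : nat) | e < m].

Lemma chiE P e : chi P e = (e \in P).
Proof. by rewrite mnmE. Qed.

Lemma Am0 : Am 0%MM = 0%MM.
Proof. by apply/mnmP => j; rewrite AmE mnm0E big1 // => e _; rewrite mnm0E. Qed.

Definition bip (P Q : {set 'I_m}) :=
  [/\ exists2 a, a \in P & P :|: Q = comp a, [disjoint P & Q] & Am (chi P) = Am (chi Q)].

Lemma bip_adj P Q x y : bip P Q -> x \in P -> adj x y -> y \in Q /\ y \notin P.
Proof.
case=> _ hd hA hx hxy; have := KE hA hxy; rewrite !chiE hx (disjointFr hd hx).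
by case: (y \in P); case: (y \in Q).
Qed.

Lemma bip_Q P Q : bip P Q -> exists b, b \in Q.
Proof.
case=> [[a ha _] _ hA]; case: (set_0Vmem Q) => [hQ|[b hb]]; last by exists b.
have : chi P = 0%MM.
  apply: KZ; rewrite hA -Am0; congr Am; apply/mnmP => e; by rewrite chiE mnm0E hQ inE.
by move/mnmP/(_ a); rewrite chiE mnm0E ha.
Qed.

Lemma bip_sym P Q : bip P Q -> bip Q P.
Proof.
move=> hb; have [b hbQ] := bip_Q hb; case: hb => [[a ha hPQ] hd hA].
split; [|by rewrite disjoint_sym|by []].
exists b => //; rewrite setUC hPQ; apply/esym/comp_eq; by rewrite -hPQ inE hbQ orbT.
Qed.

Lemma bip_adj2 P Q x y : bip P Q -> x \in Q -> adj x y -> y \in P /\ y \notin Q.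
Proof. move=> /bip_sym; exact: bip_adj. Qed.

Lemma bip_ne P Q : bip P Q -> P != Q.
Proof.
move=> hb; have := hb; case=> [[a ha _] hd _]; apply/eqP => hPQ.
by move: (disjointFr hd ha); rewrite -hPQ ha.
Qed.

Lemma DEC0 u v x : Am u = Am v -> (v x < u x)%N ->
  exists P Q, [/\ bip P Q, x \in P, (forall e, e \in P -> (v e < u e)%N)
                 & (forall e, e \in Q -> (u e < v e)%N)].
Proof.
move=> hA hx.
pose P := [set e in comp x | (v e < u e)%N]; pose Q := [set e in comp x | (u e < v e)%N].
have hD : comp x \subset [set e | u e != v e].
  apply: closed_comp; last by rewrite inE gtn_eqF.
  move=> a b hab; rewrite !inE; have := KE hA hab; lia.
exists P, Q; split.
- split.
  + exists x; first by rewrite inE comp_refl hx.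
    apply/setP => e; rewrite !inE; case he: (connect adj x e) => //=.
    have he' : e \in comp x by rewrite inE.
    by move/subsetP/(_ e he'): hD; rewrite inE; lia.
  + rewrite -setI_eq0; apply/eqP/setP => e; rewrite !inE.
    by case: (connect adj x e); case: ltngtP.
  + apply/mnmP => j; rewrite !AmE.
    have [x0 [y0 [hxy hS hx0 hy0]]] := pair_ex j.
    rewrite !(sum_pair _ hxy hS) !chiE !inE.
    have hadj : adj x0 y0 by rewrite /adj hxy; apply/existsP; exists j; rewrite hx0 hy0.
    have := KE hA hadj.
    case hc : (connect adj x x0).
      have hc' : x0 \in comp x by rewrite inE.
      have := comp_adj hc' hadj; rewrite inE => ->; rewrite /=; lia.
    have -> : (connect adj x y0) = false.
      apply/negbTE; apply: contraFN hc => hc.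
      have hc' : y0 \in comp x by rewrite inE.
      by have := comp_adj hc' (_ : adj y0 x0); rewrite adj_sym inE; apply.
    by [].
- by rewrite inE comp_refl hx.
- by move=> e; rewrite inE => /andP [].
- by move=> e; rewrite inE => /andP [].
Qed.

Lemma DEC u v : Am u = Am v -> u <> v ->
  exists P Q, [/\ bip P Q, (forall e, e \in P -> (v e < u e)%N)
                 & (forall e, e \in Q -> (u e < v e)%N)].
Proof.
move=> hA huv.
have [x hx] : exists x, u x != v x.
  apply/existsP; rewrite -negb_forall; apply/negP => /forallP h.
  by apply: huv; apply/mnmP => e; apply/eqP.
case: (ltngtP (u x) (v x)) => hlt; last by rewrite hlt eqxx in hx.
- have [P [Q [hb _ k1 k2]]] := DEC0 (esym hA) hlt.
  by exists Q, P; split => //; apply: bip_sym.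
- have [P [Q [hb _ k1 k2]]] := DEC0 hA hlt.
  by exists P, Q.
Qed.


Lemma bip_uniq P Q P' Q' z : bip P Q -> bip P' Q' -> z \in P :|: Q -> z \in P' :|: Q' ->
  (P = P' /\ Q = Q') \/ (P = Q' /\ Q = P').
Proof.
move=> hb hb' hz hz'.
have := hb; case=> [[a ha hPQ] hd _]; have := hb'; case=> [[a' ha' hPQ'] hd' _].
have hC : P :|: Q = P' :|: Q'.
  rewrite hPQ hPQ'; rewrite hPQ in hz; rewrite hPQ' in hz'.
  by rewrite -(comp_eq hz) -(comp_eq hz').
have hzc : z \in comp a by rewrite -hPQ.
have f2 e : ((e \in P) || (e \in Q)) = ((e \in P') || (e \in Q')).
  by move/setP/(_ e): hC; rewrite !inE.
have d1 e : ~~ ((e \in P) && (e \in Q)).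
  by apply/negP => /andP [k1 k2]; move: (disjointFr hd k1); rewrite k2.
have d2 e : ~~ ((e \in P') && (e \in Q')).
  by apply/negP => /andP [k1 k2]; move: (disjointFr hd' k1); rewrite k2.
have hcomp e : ((e \in P) || (e \in Q)) = (e \in comp a).
  by rewrite -hPQ inE.
pose X := (P :&: P') :|: (Q :&: Q'); pose Y := (P :&: Q') :|: (Q :&: P').
have hX : forall x y, adj x y -> x \in X -> y \in X.
  move=> x y hxy; rewrite !inE => /orP [] /andP [k1 k3].
    by rewrite (bip_adj hb k1 hxy).1 (bip_adj hb' k3 hxy).1 orbT.
  by rewrite (bip_adj2 hb k1 hxy).1 (bip_adj2 hb' k3 hxy).1.
have hY : forall x y, adj x y -> x \in Y -> y \in Y.
  move=> x y hxy; rewrite !inE => /orP [] /andP [k1 k3].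
    by rewrite (bip_adj hb k1 hxy).1 (bip_adj2 hb' k3 hxy).1 orbT.
  by rewrite (bip_adj2 hb k1 hxy).1 (bip_adj hb' k3 hxy).1.
have hzXY : (z \in X) || (z \in Y).
  move: (f2 z) (d1 z) (d2 z); move: hz.
  rewrite !inE; case: (z \in P); case: (z \in Q); case: (z \in P'); case: (z \in Q') => //.
case/orP: hzXY => hzW.
- have hsub := closed_comp2 hX hzW hzc.
  left; split; apply/setP => e; move/subsetP/(_ e): hsub; rewrite -hcomp !inE;
  move: (f2 e) (d1 e) (d2 e);
  case: (e \in P); case: (e \in Q); case: (e \in P'); case: (e \in Q') => //=; by move=> _ _ _ /(_ isT).
- have hsub := closed_comp2 hY hzW hzc.
  right; split; apply/setP => e; move/subsetP/(_ e): hsub; rewrite -hcomp !inE;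
  move: (f2 e) (d1 e) (d2 e);
  case: (e \in P); case: (e \in Q); case: (e \in P'); case: (e \in Q') => //=; by move=> _ _ _ /(_ isT).
Qed.

Lemma chi_inj P Q : chi P = chi Q -> P = Q.
Proof.
move/mnmP => h; apply/setP => e; have := h e; rewrite !chiE.
by case: (e \in P); case: (e \in Q).
Qed.

Lemma chi_le (u : 'X_{1..m}) v (P : {set 'I_m}) :
  (forall e, e \in P -> (v e < u e)%N) -> mdivides (chi P) u.
Proof. move=> h e; rewrite chiE; case he: (e \in P) => //; have := h e he; lia. Qed.

Lemma supp_sub (u : 'X_{1..m}) (P P' : {set 'I_m}) (v : 'X_{1..m}) : mdivides u (chi P) ->
  (forall e, e \in P' -> (v e < u e)%N) -> P' \subset P.
Proof.
move=> hu h; apply/subsetP => e he; have := h e he; have := hu e; rewrite chiE.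
by case: (e \in P) => //=; lia.
Qed.

Lemma chi_eq (u : 'X_{1..m}) P : mdivides u (chi P) -> mdivides (chi P) u -> u = chi P.
Proof. move=> k1 k2; apply/mnmP => e; have := k1 e; have := k2 e; lia. Qed.

Lemma bip_anchor P Q : bip P Q -> exists a, a \in P.
Proof. by case=> [[a ha _] _ _]; exists a. Qed.

Lemma KEY P Q a b : bip P Q -> Am a = Am b -> a <> b -> mdivides a (chi P) ->
  a = chi P /\ b = chi Q.
Proof.
move=> hb hA hab hdiv.
have [P' [Q' [hb' k1 k2]]] := DEC hA hab.
have hsub := supp_sub hdiv k1.
have [z hz] := bip_anchor hb'.
have hzP : z \in P by move/subsetP: hsub; apply.
have hz1 : z \in P :|: Q by rewrite inE hzP.
have hz2 : z \in P' :|: Q' by rewrite inE hz.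
have [[eP eQ]|[eP eQ]] := bip_uniq hb hb' hz1 hz2.
- subst P' Q'.
  have ha : a = chi P by apply: chi_eq => //; apply: chi_le k1.
  split => //.
  have hq : mdivides (chi Q) b by apply: chi_le k2.
  have hbw : b = (chi Q + (b - chi Q))%MM.
    by rewrite addmC submK //; apply/mnm_lepP.
  have hb0 : (b - chi Q)%MM = 0%MM.
    apply: (@KZ2 (chi Q)); rewrite -hbw -hA ha; by case: hb.
  by rewrite hbw hb0 addmC add0m.
- subst P; case: hb => _ hd _.
  by move: (disjointFr hd hzP); rewrite eQ hz.
Qed.


Lemma G1 (p : {mpoly K[m]}) : primitive_binomial edge p ->
  exists P Q, bip P Q /\ p = binom K (chi P) (chi Q).
Proof.
case=> u [v [-> huv ht hprim]]; have hA := (toricB u v).1 ht.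
have [P [Q [hb k1 k2]]] := DEC hA huv; exists P, Q; split => //.
symmetry; apply: hprim.
- by move/chi_inj => e; move: (bip_ne hb); rewrite e eqxx.
- by apply/toricB; case: hb.
- exact: chi_le k1.
- exact: chi_le k2.
Qed.

Lemma G2 P Q : bip P Q -> primitive_binomial edge (binom K (chi P) (chi Q)).
Proof.
move=> hb; exists (chi P), (chi Q); split => //.
- by move/chi_inj => e; move: (bip_ne hb); rewrite e eqxx.
- by apply/toricB; case: hb.
move=> u' v' huv ht hu hv; have hA := (toricB u' v').1 ht.
have [P' [Q' [hb' k1 k2]]] := DEC hA huv.
have hsub := supp_sub hu k1.
have [z hz] := bip_anchor hb'.
have hzP : z \in P by move/subsetP: hsub; apply.
have hz1 : z \in P :|: Q by rewrite inE hzP.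
have hz2 : z \in P' :|: Q' by rewrite inE hz.
have [[eP eQ]|[eP eQ]] := bip_uniq hb hb' hz1 hz2.
- subst P' Q'.
  have -> : u' = chi P by apply: chi_eq => //; apply: chi_le k1.
  have -> : v' = chi Q by apply: chi_eq => //; apply: chi_le k2.
  by [].
- subst P; case: hb => _ hd _.
  by move: (disjointFr hd hzP); rewrite eQ hz.
Qed.

Lemma COEF (c : {mpoly K[m]}) a z : (c * 'X_[a])@_z != 0 -> mdivides a z.
Proof.
rewrite -mcoeff_msupp (perm_mem (msuppMX c a)) => /mapP [m' _ ->] i.
by rewrite mnmDE leq_addr.
Qed.

Lemma COEF2 (c : {mpoly K[m]}) a b z : (c * binom K a b)@_z != 0 ->
  mdivides a z \/ mdivides b z.
Proof.
rewrite /binom mulrBr mcoeffB.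
case: (eqVneq ((c * 'X_[a])@_z) 0) => [->|h]; last by left; apply: COEF h.
case: (eqVneq ((c * 'X_[b])@_z) 0) => [->|h]; last by right; apply: COEF h.
by rewrite subrr eqxx.
Qed.


Lemma FIND P Q (T : {mpoly K[m]} -> Prop) : bip P Q ->
  in_gen_ideal T (binom K (chi P) (chi Q)) ->
  (forall q, T q -> exists a b, q = binom K a b /\ Am a = Am b) ->
  exists q, T q /\ (q = binom K (chi P) (chi Q) \/ q = - binom K (chi P) (chi Q)).
Proof.
move=> hb hI hT.
have hnz : (binom K (chi P) (chi Q))@_(chi P) != 0.
  rewrite /binom mcoeffB !mcoeffX eqxx.
  have -> : (chi Q == chi P) = false.
    by apply/negbTE; apply/eqP => /chi_inj e; move: (bip_ne hb); rewrite e eqxx.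
  by rewrite subr0 oner_eq0.
have [q [c [hq hc]]] := ideal_coef hI hnz.
have [a [b [eq hA]]] := hT q hq; subst q.
case: (eqVneq a b) => [eab|hab].
  by move: hc; rewrite eab /binom subrr mulr0 mcoeff0 eqxx.
have hab' : a <> b by apply/eqP.
exists (binom K a b); split => //.
case: (COEF2 hc) => hd.
- by have [-> ->] := KEY hb hA hab' hd; left.
- have [-> ->] := KEY hb (esym hA) (fun e => hab' (esym e)) hd.
  by right; rewrite /binom opprB.
Qed.

Definition dterm (u v : 'X_{1..m}) e := (u e - v e + (v e - u e))%N.
Definition dist (u v : 'X_{1..m}) := (\sum_(e < m) dterm u v e)%N.

Lemma dist0 u v : dist u v = 0%N -> u = v.
Proof.
move/eqP; rewrite /dist sum_nat_eq0 => /forallP h; apply/mnmP => e.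
have := h e; rewrite /dterm /=; lia.
Qed.

Lemma GEN1 k : forall u v, (dist u v < k)%N -> Am u = Am v ->
  in_gen_ideal (primitive_binomial edge) (binom K u v).
Proof.
elim: k => [//|k IH] u v hd hA.
case: (eqVneq u v) => [<-|huv']; first by rewrite /binom subrr; apply: ideal0.
have huv : u <> v by apply/eqP.
have [P [Q [hb k1 k2]]] := DEC hA huv.
have hPu := chi_le k1.
set u0 := (u - chi P)%MM; set u2 := (u0 + chi Q)%MM.
have hu : u = (u0 + chi P)%MM by rewrite /u0 submK //; apply/mnm_lepP.
have hA2 : Am u2 = Am v.
  by rewrite /u2 AmD; case: hb => _ _ <-; rewrite -AmD -hu.
have [a0 ha0] := bip_anchor hb.
have hdisj := hb; case: hdisj => _ hdisj _.
have pe e : (dterm u2 v e + (e \in P) <= dterm u v e)%N.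
  rewrite /dterm /u2 /u0 mnmDE mnmBE !chiE.
  have F0 : nat_of_bool false = 0%N by [].
  have F1 : nat_of_bool true = 1%N by [].
  case hP: (e \in P); case hQ: (e \in Q); rewrite ?F0 ?F1.
  - by move: (disjointFr hdisj hP); rewrite hQ.
  - have := k1 e hP; rewrite /=; move: (u e) (v e) => x y; clear => h; lia.
  - have := k2 e hQ; rewrite /=; move: (u e) (v e) => x y; clear => h; lia.
  - rewrite /=; move: (u e) (v e) => x y; clear; lia.
have hdist : (dist u2 v < dist u v)%N.
  rewrite /dist (bigD1 a0) //= [X in (_ < X)%N](bigD1 a0) //=.
  have hs : (\sum_(e < m | e != a0) dterm u2 v e <= \sum_(e < m | e != a0) dterm u v e)%N.
    by apply: leq_sum => e _; have := pe e; lia.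
  move: (pe a0); rewrite ha0 /nat_of_bool addn1 => hpe; by rewrite -addSn; apply: leq_add.
have eqb : binom K u v = 'X_[u0] * binom K (chi P) (chi Q) + binom K u2 v.
  by rewrite /binom /u2 {1}hu !mpolyXD mulrBr addrA subrK.
rewrite eqb; apply: idealD.
  by apply: idealM; apply: ideal_gen; apply: G2.
apply: IH => //; lia.
Qed.

Definition rep (w : 'X_{1..m}) : 'X_{1..m} :=
  xchoose (ex_intro (fun w' => Am w' == Am w) w (eqxx _)).

Lemma repA w : Am (rep w) = Am w.
Proof. exact: (eqP (xchooseP (ex_intro (fun w' => Am w' == Am w) w (eqxx _)))). Qed.

Lemma rep_eq w w' : Am w = Am w' -> rep w = rep w'.
Proof. by move=> h; apply: eq_xchoose => x; rewrite h. Qed.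

Lemma phiH_lin_sum (I : Type) (r : seq I) (c : I -> K) (F : I -> 'X_{1..m}) :
  phiH edge (\sum_(i <- r) c i *: ('X_[F i] : {mpoly K[m]})) =
  \sum_(i <- r) c i *: 'X_[Am (F i)].
Proof.
rewrite /phiH raddf_sum; apply: eq_bigr => i _.
by rewrite /= comp_mpolyZ -/(phiH edge _) phiX.
Qed.

Lemma GEN2 (p : {mpoly K[m]}) : toric_ideal edge p ->
  in_gen_ideal (primitive_binomial edge) p.
Proof.
move=> hp.
set S := \sum_(w <- msupp p) ((p@_w)%:MP * binom K w (rep w)).
set r := \sum_(w <- msupp p) p@_w *: ('X_[rep w] : {mpoly K[m]}).
have hpE : p = S + r.
  rewrite /S /r -big_split /= {1}(mpolyE p); apply: eq_bigr => w _.
  by rewrite /binom mulrBr !mul_mpolyC subrK.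
have hS : phiH edge S = 0.
  rewrite /S /phiH raddf_sum big1 // => w _.
  rewrite /= rmorphM /=.
  have h0 : toric_ideal edge (binom K w (rep w)) by apply/toricB; rewrite repA.
  by rewrite /toric_ideal /phiH in h0; rewrite h0 mulr0.
have hr : phiH edge r = 0.
  have -> : r = p - S by rewrite {1}hpE addrAC subrr add0r.
  move: hS hp; rewrite /toric_ideal /phiH => hS hp.
  by rewrite comp_mpolyB hS hp subr0.
have hr0 : r = 0.
  apply/mpolyP => z; rewrite mcoeff0.
  have hrz : r@_z = \sum_(w <- msupp p) p@_w * (rep w == z)%:R.
    by rewrite /r raddf_sum; apply: eq_bigr => w _; rewrite /= mcoeffZ mcoeffX.
  case: (boolP (has (fun w => rep w == z) (msupp p))) => [/hasP [w0 _ /eqP hw0] | /hasPn hn].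
  - have key w : (rep w == z) = (Am w == Am z).
      rewrite -hw0 repA; apply/eqP/eqP => [h|h].
        by rewrite -(repA w) h repA.
      exact: rep_eq.
    have := congr1 (mcoeff (Am z)) hr.
    rewrite /r phiH_lin_sum raddf_sum mcoeff0 => h; rewrite hrz; apply: (etrans _ h).
    by apply: eq_bigr => w _; rewrite /= mcoeffZ mcoeffX repA key.
  - rewrite hrz big1_seq // => w hw.
    by have := hn w hw; move/negbTE => ->; rewrite mulr0.
rewrite hpE hr0 addr0 /S; apply: ideal_sum => w; apply: idealM.
apply: (@GEN1 (dist w (rep w)).+1) => //.
by rewrite repA.
Qed.


Lemma G_neg (g : {mpoly K[m]}) : primitive_binomial edge g -> primitive_binomial edge (- g).
Proof.
move/G1 => [P [Q [hb ->]]]; rewrite /binom opprB; apply: G2; exact: bip_sym.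
Qed.

Lemma G_bin (g : {mpoly K[m]}) : primitive_binomial edge g ->
  exists a b, g = binom K a b /\ Am a = Am b.
Proof. by case=> u [v [-> _ ht _]]; exists u, v; split => //; apply/toricB. Qed.

Lemma G_toric (g : {mpoly K[m]}) : primitive_binomial edge g -> toric_ideal edge g.
Proof. by case=> u [v [-> _ ht _]]. Qed.

Lemma ideal_toric (T : {mpoly K[m]} -> Prop) p :
  (forall q, T q -> toric_ideal edge q) -> in_gen_ideal T p -> toric_ideal edge p.
Proof.
move=> hT [s [hs ->]]; rewrite /toric_ideal /phiH raddf_sum big1_seq // => x hx.
rewrite /= rmorphM /=; have := hT _ (hs x hx); rewrite /toric_ideal /phiH => ->.
by rewrite mulr0.
Qed.

Definition canon (s : {mpoly K[m]}) := choose (fun q => (q == s) || (q == - s)) s.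

Lemma canon_neg s : canon (- s) = canon s.
Proof.
rewrite /canon (@eq_choose _ _ (fun q => (q == s) || (q == - s))); last first.
  by move=> q /=; rewrite opprK orbC.
by apply: choose_id; rewrite eqxx ?orbT.
Qed.

Lemma canon_mem s : canon s = s \/ canon s = - s.
Proof.
have := @chooseP _ (fun q => (q == s) || (q == - s)) s; rewrite eqxx => /(_ isT).
by rewrite -/(canon s) => /orP [/eqP ->|/eqP ->]; [left|right].
Qed.

Definition Sset (s : {mpoly K[m]}) := primitive_binomial edge s /\ canon s = s.

Lemma SG g : primitive_binomial edge g -> Sset g \/ Sset (- g).
Proof.
move=> hg; case: (canon_mem g) => h; first by left.
by right; split; [apply: G_neg | rewrite canon_neg].
Qed.

Lemma MAIN : unique_minimal_generating_set (@graver_basis K n m edge) (@toric_ideal K n m edge).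
Proof.
rewrite /graver_basis; split.
  exists Sset; split; [split|split].
  - move=> p; split.
      by apply: ideal_toric => q [hq _]; apply: G_toric.
    by move/GEN2 => h; apply: ideal_transfer h SG.
  - move=> s [hs hc] hI.
    have [P [Q [hb es]]] := G1 hs.
    have hT : forall q, (fun q => Sset q /\ q <> s) q -> exists a b, q = binom K a b /\ Am a = Am b.
      by move=> q [[hq _] _]; apply: G_bin.
    have hI' : in_gen_ideal (fun q => Sset q /\ q <> s) (binom K (chi P) (chi Q)).
      by rewrite -es.
    have [q [[[hq hcq] hqs] [eq|eq]]] := FIND hb hI' hT; rewrite -es in eq.
      by apply: hqs.
    apply: hqs; subst q.
    by rewrite -hcq canon_neg hc.
  - split; first by move=> s [hs _]; left.
    exact: SG.
  - by move=> s [].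
move=> S' [hgen hmin] hbin.
have hT : forall q, S' q -> exists a b, q = binom K a b /\ Am a = Am b.
  move=> q hq; have [a [b eq]] := hbin q hq; exists a, b; split => //.
  apply/toricB; rewrite -eq; apply/hgen; exact: ideal_gen.
have hb : forall g, primitive_binomial edge g -> S' g \/ S' (- g).
  move=> g hg; have [P [Q [hbip eg]]] := G1 hg.
  have hI : in_gen_ideal S' (binom K (chi P) (chi Q)).
    by rewrite -eg; apply/hgen; apply: G_toric.
  have [q [hq [e|e]]] := FIND hbip hI hT; rewrite -eg in e; subst q; [by left|by right].
split; last exact: hb.
move=> s hs.
case: (classic (primitive_binomial edge s)) => hGs; first by left.
case: (classic (primitive_binomial edge (- s))) => hGns; first by right.
exfalso; apply: (hmin s hs).
have : in_gen_ideal (primitive_binomial edge) s.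
  apply: GEN2; apply/hgen; exact: ideal_gen.
move/ideal_transfer; apply => q hq.
case: (hb q hq) => h.
  by left; split => // e; apply: hGs; rewrite -e.
by right; split => // e; apply: hGns; rewrite -e opprK.
Qed.

End Toric.

Theorem proposition4p2 (K : fieldType) (n m : nat) (edge : 'I_m -> {set 'I_n}) :
  is_hypergraph edge -> uniform_hg edge -> two_regular_hg edge ->
  unique_minimal_generating_set (@graver_basis K n m edge) (@toric_ideal K n m edge).
Proof. by move=> [_ hne] _ h2; apply: MAIN. Qed.
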